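(* Fix $q\ge 2$ and $z\in\mathbb Z$. There exist an integer $N$ and a constant $C>0$ (independent of $n$) such that for all $n\ge N$, with $k=\lceil\log_q n\rceil+z$, $$\log_2 q-\frac{C}{n}\le E_{k,q}\le \log_2 q.$$
   Context: $\Sigma_q=\{0,\dots,q-1\}$. A vector in $\Sigma_q^m$ is a $k$-RLL vector if $m<k$ or it has no run of $k$ consecutive zeros; $a_q(m,k)$ is the number of such vectors. For fixed $k,q$, $E_{k,q}=\lim_{m\to\infty}\frac{\log_2 a_q(m,k)}{m}$ (this limit exists). *)

(* Defs.v *)
From Stdlib Require Import Reals Lra Lia ZArith Arith List Bool.
Import ListNotations.
Open Scope R_scope.

Fixpoint words (q m : nat) : list (list nat) :=
  match m with
  | O => [[]]
  | S m' => flat_map (fun x => map (cons x) (words q m')) (seq 0 q)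
  end.

Fixpoint zero_prefix (k : nat) (w : list nat) : bool :=
  match k with
  | O => true
  | S k' => match w with
            | O :: w' => zero_prefix k' w'
            | _ => false
            end
  end.

Fixpoint has_zero_run (k : nat) (w : list nat) : bool :=
  zero_prefix k w || match w with [] => false | _ :: w' => has_zero_run k w' end.

Definition is_RLL (m k : nat) (w : list nat) : bool :=
  Nat.ltb m k || negb (has_zero_run k w).

Definition a_q (q m k : nat) : nat :=
  length (filter (is_RLL m k) (words q m)).

Definition log2 (x : R) : R := ln x / ln 2.

(* the sequence log2 a_q(m,k) / m, whose limit (m -> oo) is E_{k,q} *)
Definition rll_rate (q k m : nat) : R := log2 (INR (a_q q m k)) / INR m.

Definition ceilR (x : R) : Z := (- (up (- x) - 1))%Z.

Definition ceil_logq (q n : nat) : Z := ceilR (ln (INR n) / ln (INR q)).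

(* Main.v *)
Require Import Defs.
From Stdlib Require Import Reals ZArith Lia Lra List Bool Arith.
Import ListNotations.

Definition cnt (P : list nat -> bool) (l : list (list nat)) := length (filter P l).
Definition lsum (xs : list nat) := fold_right plus 0%nat xs.

Lemma cnt_ext P Q l : (forall w, P w = Q w) -> cnt P l = cnt Q l.
Proof. intros H; unfold cnt; induction l; simpl; auto. rewrite H; destruct (Q a); simpl; auto. Qed.

Lemma cnt_mono P Q l : (forall w, P w = true -> Q w = true) -> (cnt P l <= cnt Q l)%nat.
Proof. intros H; unfold cnt; induction l; simpl; auto.
  destruct (P a) eqn:E. rewrite (H a E); simpl; lia. destruct (Q a); simpl; lia. Qed.

Lemma cnt_or P Q l : (cnt (fun w => P w || Q w) l <= cnt P l + cnt Q l)%nat.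
Proof. unfold cnt; induction l; simpl; auto. destruct (P a), (Q a); simpl; lia. Qed.

Lemma cnt_compl P l : (cnt P l + cnt (fun w => negb (P w)) l = length l)%nat.
Proof. unfold cnt; induction l; simpl; auto. destruct (P a); simpl; lia. Qed.

Lemma cnt_app P l1 l2 : cnt P (l1 ++ l2) = (cnt P l1 + cnt P l2)%nat.
Proof. unfold cnt; rewrite filter_app, length_app; auto. Qed.

Lemma cnt_map P f l : cnt P (map f l) = cnt (fun w => P (f w)) l.
Proof. unfold cnt; induction l; simpl; auto. destruct (P (f a)); simpl; auto. Qed.

Lemma cnt_flat P (F : nat -> list (list nat)) xs :
  cnt P (flat_map F xs) = lsum (map (fun x => cnt P (F x)) xs).
Proof. induction xs; simpl; auto. rewrite cnt_app, IHxs; auto. Qed.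

Lemma cnt_words_S q m P : cnt P (words q (S m)) =
  lsum (map (fun x => cnt (fun w => P (x :: w)) (words q m)) (seq 0 q)).
Proof. simpl. rewrite cnt_flat. f_equal. apply map_ext. intros; apply cnt_map. Qed.

Lemma lsum_le (f g : nat -> nat) xs : (forall x, (f x <= g x)%nat) ->
  (lsum (map f xs) <= lsum (map g xs))%nat.
Proof. intros H; induction xs; simpl; auto. specialize (H a); lia. Qed.

Lemma lsum_plus (f g : nat -> nat) xs :
  lsum (map (fun x => f x + g x)%nat xs) = (lsum (map f xs) + lsum (map g xs))%nat.
Proof. induction xs; simpl; auto; lia. Qed.

Lemma lsum_mulr (f : nat -> nat) c xs :
  lsum (map (fun x => f x * c)%nat xs) = (lsum (map f xs) * c)%nat.
Proof. induction xs; simpl; auto; lia. Qed.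

Lemma lsum_const c (xs : list nat) : lsum (map (fun _ => c) xs) = (length xs * c)%nat.
Proof. induction xs; simpl; auto; lia. Qed.

Lemma cnt_true l : cnt (fun _ => true) l = length l.
Proof. unfold cnt; induction l; simpl; auto. Qed.

Lemma words_len q m : length (words q m) = (q ^ m)%nat.
Proof.
  rewrite <- cnt_true. induction m. reflexivity. rewrite cnt_words_S.
  rewrite (map_ext _ (fun _ => (q ^ m)%nat)) by (intros; apply IHm).
  rewrite lsum_const, length_seq. simpl; auto.
Qed.

Lemma cnt_concat q a b (P P1 P2 : list nat -> bool) :
  (forall u v, P1 u = true -> P2 v = true -> P (u ++ v) = true) ->
  (cnt P1 (words q a) * cnt P2 (words q b) <= cnt P (words q (a + b)))%nat.
Proof.
  revert P P1. induction a; intros P P1 H.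
  - simpl. unfold cnt at 1; simpl. destruct (P1 []) eqn:E; simpl.
    + rewrite Nat.add_0_r. apply cnt_mono. intros v Hv. apply (H [] v E Hv).
    + lia.
  - rewrite Nat.add_succ_l, !cnt_words_S, <- lsum_mulr. apply lsum_le.
    intros x. apply (IHa (fun w => P (x :: w)) (fun w => P1 (x :: w))).
    intros u v Hu Hv. apply (H (x :: u) v Hu Hv).
Qed.

Lemma lsum_zero (f : nat -> nat) xs : (forall x, In x xs -> f x = 0%nat) -> lsum (map f xs) = 0%nat.
Proof. intros H; induction xs; simpl; auto. rewrite H, IHxs; simpl; auto. intros; apply H; simpl; auto. Qed.

Lemma zp_cnt q (hq : (1 <= q)%nat) k m :
  (cnt (zero_prefix k) (words q m) * q ^ k <= q ^ m)%nat.
Proof.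
  revert k. induction m; intros k.
  - destruct k; simpl; unfold cnt; simpl; lia.
  - destruct k.
    + rewrite (cnt_ext _ (fun _ => true)) by reflexivity. rewrite cnt_true, words_len. simpl; lia.
    + rewrite cnt_words_S. destruct q as [|q']; [lia|]. simpl seq. simpl map. simpl lsum.
      rewrite (lsum_zero _ (seq 1 q')).
      2:{ intros x Hx. apply in_seq in Hx. destruct x as [|x]; [lia|].
          transitivity (cnt (fun _ => false) (words (S q') m)).
          apply cnt_ext; reflexivity. unfold cnt. clear.
          induction (words (S q') m); simpl; auto. }
      specialize (IHm k). rewrite Nat.add_0_r, !Nat.pow_succ_r'. rewrite Nat.mul_comm, <- Nat.mul_assoc. apply Nat.mul_le_mono_l.
      rewrite Nat.mul_comm. exact IHm.
Qed.

Lemma bad_cnt q (hq : (1 <= q)%nat) k (hk : (1 <= k)%nat) m :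
  (cnt (has_zero_run k) (words q m) * q ^ k <= m * q ^ m)%nat.
Proof.
  induction m.
  - destruct k; [lia|]. simpl. unfold cnt; simpl. lia.
  - rewrite cnt_words_S.
    assert (H1 : (lsum (map (fun x => cnt (fun w => has_zero_run k (x :: w)) (words q m)) (seq 0 q))
       <= cnt (zero_prefix k) (words q (S m)) + q * cnt (has_zero_run k) (words q m))%nat).
    { rewrite cnt_words_S.
      replace (q * cnt (has_zero_run k) (words q m))%nat with
        (lsum (map (fun _ => cnt (has_zero_run k) (words q m)) (seq 0 q)))
        by (rewrite lsum_const, length_seq; auto).
      rewrite <- lsum_plus.
      apply lsum_le. intros x. simpl has_zero_run. apply cnt_or. }
    pose proof (zp_cnt q hq k (S m)).
    set (b := cnt (has_zero_run k) (words q m)) in *.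
    set (z := cnt (zero_prefix k) (words q (S m))) in *.
    set (s := lsum _) in *.
    rewrite Nat.pow_succ_r' in *.
    assert (s * q ^ k <= z * q ^ k + q * (b * q ^ k))%nat by nia.
    assert (q * (b * q ^ k) <= q * (m * q ^ m))%nat by (apply Nat.mul_le_mono_l; auto).
    nia.
Qed.

Lemma zp_app_nz k u y v : y <> 0%nat -> zero_prefix k (u ++ y :: v) = true -> zero_prefix k u = true.
Proof.
  revert u; induction k; intros u Hy H; auto. destruct u as [|x u]; simpl in *.
  - destruct y; [congruence|discriminate].
  - destruct x; [apply (IHk u Hy H)|discriminate].
Qed.

Lemma hzr_app k u y v : y <> 0%nat -> has_zero_run k u = false ->
  has_zero_run k (y :: v) = false -> has_zero_run k (u ++ y :: v) = false.
Proof.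
  intros Hy. induction u as [|a u IH]; intros Hu Hv; simpl; auto.
  simpl in Hu. apply orb_false_elim in Hu as [H1 H2].
  rewrite (IH H2 Hv), orb_false_r.
  destruct (zero_prefix k (a :: u ++ y :: v)) eqn:E; auto.
  rewrite (zp_app_nz k (a :: u) y v Hy E) in H1. discriminate.
Qed.

Definition Rg (k : nat) (w : list nat) : bool :=
  match w with [] => true | x :: _ => negb (Nat.eqb x 0) end && negb (has_zero_run k w).

Lemma Rg_app k u v : Rg k u = true -> Rg k v = true -> Rg k (u ++ v) = true.
Proof.
  intros Hu Hv. destruct u as [|x u]; auto. destruct v as [|y v].
  { rewrite app_nil_r; auto. }
  unfold Rg in *. apply andb_prop in Hu as [Hx Hu]. apply andb_prop in Hv as [Hy Hv].
  rewrite negb_true_iff in Hu, Hv. rewrite hzr_app; auto.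
  - simpl. rewrite Hx. reflexivity.
  - apply negb_true_iff in Hy. apply Nat.eqb_neq in Hy; auto.
Qed.

Lemma Rg_nil k : (1 <= k)%nat -> Rg k [] = true.
Proof. destruct k; [lia|]. reflexivity. Qed.

Lemma Rg_pow q k (hk : (1 <= k)%nat) L j :
  (cnt (Rg k) (words q L) ^ j <= cnt (Rg k) (words q (j * L)))%nat.
Proof.
  induction j.
  - simpl. unfold cnt; simpl. rewrite Rg_nil; simpl; auto.
  - simpl (S j * L)%nat. rewrite Nat.pow_succ_r'.
    eapply Nat.le_trans; [|apply (cnt_concat q L (j * L) (Rg k) (Rg k) (Rg k)); apply Rg_app].
    apply Nat.mul_le_mono_l; auto.
Qed.

Lemma Rg_block q (hq : (2 <= q)%nat) k (hk : (1 <= k)%nat) m :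
  (cnt (fun w => negb (has_zero_run k w)) (words q m) <= cnt (Rg k) (words q (S m)))%nat.
Proof.
  pose (P1 := fun u : list nat => match u with [x] => Nat.eqb x 1 | _ => false end).
  assert (H1 : (1 <= cnt P1 (words q 1))%nat).
  { rewrite cnt_words_S. destruct q as [|[|q']]; [lia|lia|]. simpl. lia. }
  eapply Nat.le_trans; [|apply (cnt_concat q 1 m (Rg k) P1 (fun w => negb (has_zero_run k w)))].
  - nia.
  - intros u v Hu Hv. destruct u as [|x [|y u]]; try discriminate. simpl in Hu.
    apply Nat.eqb_eq in Hu; subst x. unfold Rg. simpl app. simpl.
    destruct k; [lia|]. simpl. exact Hv.
Qed.

Lemma Rg_RLL k L w : Rg k w = true -> is_RLL L k w = true.
Proof. unfold Rg, is_RLL. intros H. apply andb_prop in H as [_ H]. rewrite H, orb_true_r; auto. Qed.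

Lemma ln_le' x y : 0 < x -> x <= y -> ln x <= ln y.
Proof. intros H1 H2. destruct (Rle_lt_or_eq_dec _ _ H2). left; apply ln_increasing; auto. subst; lra. Qed.

Lemma lim_lb (u : nat -> R) E c L : (0 < L)%nat -> Un_cv u E ->
  (forall j, (1 <= j)%nat -> c <= u (j * L)%nat) -> c <= E.
Proof.
  intros HL Hu H. destruct (Rle_lt_dec c E); auto.
  destruct (Hu (c - E)) as [N HN]; [lra|].
  assert (HN' : (N <= S N * L)%nat) by nia.
  specialize (HN _ HN'). unfold R_dist in HN. apply Rabs_def2 in HN.
  specialize (H (S N) ltac:(lia)). lra.
Qed.

Lemma lim_ub (u : nat -> R) E c : Un_cv u E ->
  (forall m, (1 <= m)%nat -> u m <= c) -> E <= c.
Proof.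
  intros Hu H. destruct (Rle_lt_dec E c); auto.
  destruct (Hu (E - c)) as [N HN]; [lra|].
  specialize (HN (S N) ltac:(lia)). unfold R_dist in HN. apply Rabs_def2 in HN.
  specialize (H (S N) ltac:(lia)). lra.
Qed.

Lemma ceilR_ge x : x <= IZR (ceilR x).
Proof.
  unfold ceilR. destruct (archimed (- x)) as [H1 H2].
  rewrite opp_IZR, minus_IZR. lra.
Qed.

Lemma ceil_bound q n : (2 <= q)%nat -> (1 <= n)%nat ->
  (0 <= ceil_logq q n)%Z /\ (n <= q ^ Z.to_nat (ceil_logq q n))%nat.
Proof.
  intros hq hn. unfold ceil_logq.
  set (x := ln (INR n) / ln (INR q)).
  assert (Hq : 1 < INR q) by (apply lt_1_INR; lia).
  assert (Hlq : 0 < ln (INR q)) by (rewrite <- ln_1; apply ln_increasing; lra).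
  assert (Hn : 1 <= INR n) by (rewrite <- INR_1; apply le_INR; auto).
  assert (Hln : 0 <= ln (INR n)) by (rewrite <- ln_1; apply ln_le'; lra).
  assert (Hx : 0 <= x) by (unfold x; apply Rmult_le_pos; [lra|left; apply Rinv_0_lt_compat; lra]).
  pose proof (ceilR_ge x) as Hc.
  assert (Hc0 : (0 <= ceilR x)%Z) by (apply le_IZR; lra).
  split; auto.
  apply INR_le. rewrite pow_INR.
  destruct (Rle_lt_dec (INR n) (INR q ^ Z.to_nat (ceilR x))) as [h|h]; auto.
  exfalso. apply ln_increasing in h; [|apply pow_lt; lra].
  rewrite ln_pow in h by lra. rewrite INR_IZR_INZ, Z2Nat.id in h by auto.
  assert (ln (INR n) = x * ln (INR q)) by (unfold x; field; lra).
  nra.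
Qed.

Theorem lemma3 (q : nat) (z : Z) (hq : (2 <= q)%nat) :
  exists (N : nat) (C : R), C > 0 /\
    forall n : nat, (N <= n)%nat ->
      forall E : R,
        Un_cv (rll_rate q (Z.to_nat (ceil_logq q n + z)%Z)) E ->
        log2 (INR q) - C / INR n <= E <= log2 (INR q).
Proof.
  set (zz := Z.to_nat (Z.abs z)).
  set (D := (q ^ (zz + 1))%nat).
  assert (Hq : 1 < INR q) by (apply lt_1_INR; lia).
  assert (Hlq : 0 < ln (INR q)) by (rewrite <- ln_1; apply ln_increasing; lra).
  assert (Hl2 : 0 < ln 2) by (rewrite <- ln_1; apply ln_increasing; lra).
  set (l := log2 (INR q)).
  assert (Hl : 0 < l) by (unfold l, log2; apply Rdiv_lt_0_compat; lra).
  assert (HD : (1 <= D)%nat) by (unfold D; pose proof (Nat.pow_le_mono_l 1 q (zz+1)); rewrite Nat.pow_1_l in *; lia).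
  assert (HDR : 1 <= INR D) by (rewrite <- INR_1; apply le_INR; auto).
  exists D, ((l + 1) * INR D). split; [nra|].
  intros n Hn E HE.
  destruct (ceil_bound q n hq ltac:(lia)) as [Hc0 Hcn].
  set (c := ceil_logq q n) in *.
  set (K := Z.to_nat (c + z)) in *.
  set (cn := Z.to_nat c) in *.
  assert (HK : (1 <= K /\ cn <= K + zz)%nat).
  { assert (h : (1 <= K \/ cn <= zz)%nat) by (unfold K, cn, zz; lia).
    destruct h as [h|h].
    - split; auto. unfold K, cn, zz; lia.
    - exfalso. assert (q ^ cn <= q ^ zz)%nat by (apply Nat.pow_le_mono_r; lia).
      assert (q ^ zz < D)%nat.
      { unfold D. rewrite Nat.pow_add_r, Nat.pow_1_r.
        assert (0 < q ^ zz)%nat by (apply Nat.neq_0_lt_0, Nat.pow_nonzero; lia). nia. }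
      lia. }
  destruct HK as [HK1 HK2].
  set (m := (q ^ (K - 1))%nat).
  assert (Hm : (1 <= m)%nat) by (unfold m; apply Nat.neq_0_lt_0, Nat.pow_nonzero; lia).
  assert (HqK : (q ^ K = q * m)%nat).
  { unfold m. rewrite <- Nat.pow_succ_r'. f_equal. lia. }
  assert (HnmD : (n <= m * D)%nat).
  { unfold m, D. rewrite <- Nat.pow_add_r.
    eapply Nat.le_trans; [exact Hcn|]. apply Nat.pow_le_mono_r; lia. }
  set (g := cnt (Rg K) (words q (S m))).
  assert (Hg : (q ^ m <= 2 * g)%nat).
  { pose proof (Rg_block q hq K HK1 m).
    pose proof (cnt_compl (has_zero_run K) (words q m)). rewrite words_len in H0.
    pose proof (bad_cnt q ltac:(lia) K HK1 m). rewrite HqK in H1.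
    set (b := cnt (has_zero_run K) (words q m)) in *.
    assert (b * q <= q ^ m)%nat.
    { apply (Nat.mul_le_mono_pos_l _ _ m); [lia|]. nia. }
    fold g in H. nia. }
  assert (Hqm : (1 <= q ^ m)%nat) by (apply Nat.neq_0_lt_0, Nat.pow_nonzero; lia).
  assert (HgR : INR q ^ m / 2 <= INR g).
  { rewrite <- pow_INR. apply le_INR in Hg. rewrite mult_INR in Hg. simpl in Hg. lra. }
  assert (Hg0 : 0 < INR q ^ m / 2) by (apply Rdiv_lt_0_compat; [apply pow_lt|]; lra).
  assert (Hlg : INR m * l - 1 <= log2 (INR g)).
  { unfold l, log2. apply ln_le' in HgR; auto.
    unfold Rdiv in HgR at 1. rewrite ln_mult, ln_Rinv, ln_pow in HgR by (try apply pow_lt; lra).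
    apply (Rmult_le_compat_r (/ ln 2)) in HgR; [|left; apply Rinv_0_lt_compat; lra].
    replace (INR m * (ln (INR q) / ln 2) - 1) with ((INR m * ln (INR q) + - ln 2) * / ln 2)
      by (field; lra).
    exact HgR. }
  split.
  - assert (HnR : INR n <= INR m * INR D) by (rewrite <- mult_INR; apply le_INR; auto).
    assert (Hn1 : 1 <= INR n) by (rewrite <- INR_1; apply le_INR; lia).
    assert (HmR : 1 <= INR m) by (rewrite <- INR_1; apply le_INR; lia).
    apply Rle_trans with (log2 (INR g) / INR (S m)).
    + apply Rle_trans with ((INR m * l - 1) / INR (S m)).
      * rewrite S_INR.
        replace ((INR m * l - 1) / (INR m + 1)) with (l - (l + 1) / (INR m + 1)) by (field; lra).
        apply Rplus_le_compat_l, Ropp_le_contravar. unfold Rdiv. rewrite Rmult_assoc.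
        apply Rmult_le_compat_l; [lra|].
        set (x := / (INR m + 1)). set (y := / INR n).
        assert (hx : x * (INR m + 1) = 1) by (unfold x; field; lra).
        assert (hy : y * INR n = 1) by (unfold y; field; lra).
        assert (hx0 : 0 < x) by (unfold x; apply Rinv_0_lt_compat; lra).
        assert (hy0 : 0 < y) by (unfold y; apply Rinv_0_lt_compat; lra).
        assert (h : INR n * (x * y) <= (INR m + 1) * INR D * (x * y))
          by (apply Rmult_le_compat_r; nra).
        nra.
      * unfold Rdiv. apply Rmult_le_compat_r; auto.
        left; apply Rinv_0_lt_compat, lt_0_INR; lia.
    + apply (lim_lb (rll_rate q K) E (log2 (INR g) / INR (S m)) (S m)); auto; try lia.
      intros j Hj. unfold rll_rate.
      assert (Hga : (g ^ j <= a_q q (j * S m) K)%nat).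
      { eapply Nat.le_trans; [apply (Rg_pow q K HK1 (S m) j)|].
        unfold a_q. apply cnt_mono. intros w; apply Rg_RLL. }
      assert (HgP : 0 < INR g) by lra.
      apply le_INR in Hga. rewrite pow_INR in Hga.
      apply ln_le' in Hga; [|apply pow_lt; lra]. rewrite ln_pow in Hga by lra.
      assert (HjR : 0 < INR j) by (apply lt_0_INR; lia).
      assert (HSm : 0 < INR (S m)) by (apply lt_0_INR; lia).
      replace (log2 (INR g) / INR (S m)) with (INR j * ln (INR g) / ln 2 / INR (j * S m))
        by (unfold log2; rewrite mult_INR; field; lra).
      unfold log2, Rdiv. apply Rmult_le_compat_r.
      { left; apply Rinv_0_lt_compat. rewrite mult_INR; nra. }
      apply Rmult_le_compat_r; [left; apply Rinv_0_lt_compat; lra|]. exact Hga.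
  - apply (lim_ub _ E l HE). intros M HM. unfold rll_rate, l, log2.
    assert (HMR : 0 < INR M) by (apply lt_0_INR; lia).
    assert (Ha : (a_q q M K <= q ^ M)%nat).
    { unfold a_q. rewrite <- words_len. apply filter_length_le. }
    destruct (Nat.eq_dec (a_q q M K) 0) as [h0|h0].
    + rewrite h0. assert (hl0 : ln (INR 0) = 0).
      { rewrite INR_0. unfold ln. destruct Rlt_dec as [r|r]; [exfalso; exact (Rlt_irrefl 0 r)|]. reflexivity. }
      rewrite hl0. unfold Rdiv. rewrite !Rmult_0_l. left; apply Rdiv_lt_0_compat; lra.
    + assert (HaP : 0 < INR (a_q q M K)) by (apply lt_0_INR; lia).
      apply le_INR in Ha. rewrite pow_INR in Ha. apply ln_le' in Ha; auto.
      rewrite ln_pow in Ha by lra.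
      replace (ln (INR q) / ln 2) with (INR M * ln (INR q) / ln 2 / INR M) by (field; lra).
      unfold Rdiv. apply Rmult_le_compat_r; [left; apply Rinv_0_lt_compat; lra|].
      apply Rmult_le_compat_r; [left; apply Rinv_0_lt_compat; lra|]. exact Ha.
Qed.
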